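(* Let $\beta\in\mathbb C\setminus\mathbb Z$ and let $Q_+,\widetilde Q_+,Q_-,\widetilde Q_-$ be entire functions such that each of the pairs $(Q_+,Q_-)$, $(\widetilde Q_+,Q_-)$ and $(Q_+,\widetilde Q_-)$ satisfies the QQ system with momentum $\beta$. Then $Q_+=\widetilde Q_+$ and $Q_-=\widetilde Q_-$.
   Context: A pair $(Q_+,Q_-)$ of entire functions satisfies the QQ system with momentum $\beta$ if for all $E\in\mathbb C$: $e^{i\frac{\beta\pi}2}Q_+(iE)Q_-(-iE)-e^{-i\frac{\beta\pi}2}Q_+(-iE)Q_-(iE)=i\,e^{\frac{E\pi}4}$. *)

(* Defs.v *)
From Stdlib Require Import Reals ZArith.
From Coquelicot Require Import Coquelicot.
From Coquelicot Require Import Complex.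
Open Scope C_scope.

Definition Cexp (z : C) : C :=
  (exp (Re z) * cos (Im z), exp (Re z) * sin (Im z))%R.

Definition entire (f : C -> C) : Prop :=
  forall z : C, @ex_derive C_AbsRing C_NormedModule f z.

Definition QQ_system (beta : C) (Qp Qm : C -> C) : Prop :=
  forall E : C,
    Cexp (Ci * beta * RtoC PI / 2) * Qp (Ci * E) * Qm (- (Ci * E))
    - Cexp (- (Ci * beta * RtoC PI / 2)) * Qp (- (Ci * E)) * Qm (Ci * E)
    = Ci * Cexp (E * RtoC PI / 4).

(* Main.v *)
Require Import Defs.
From Stdlib Require Import Reals ZArith Lra Classical FunctionalExtensionality.
From Coquelicot Require Import Coquelicot.
From Coquelicot Require Import Complex.
Open Scope C_scope.

Lemma Cmult_int (c u : C) : c <> 0 -> c * u = 0 -> u = 0.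
Proof. intros Hc H. replace u with (/c * (c*u)) by (field; exact Hc). rewrite H. ring. Qed.

Lemma Cexp_add (u v : C) : Cexp (u + v) = Cexp u * Cexp v.
Proof.
  destruct u as [u1 u2], v as [v1 v2]. unfold Cexp. simpl.
  rewrite exp_plus, cos_plus, sin_plus.
  apply injective_projections; simpl; ring.
Qed.

Lemma Cexp_0 : Cexp 0 = 1.
Proof. unfold Cexp. simpl. rewrite exp_0, cos_0, sin_0.
  apply injective_projections; simpl; ring. Qed.

Lemma Cexp_RtoC (r : R) : Cexp (RtoC r) = RtoC (exp r).
Proof. unfold Cexp. simpl. rewrite cos_0, sin_0.
  apply injective_projections; simpl; ring. Qed.

Lemma negi (E : C) : Ci * (- E) = - (Ci * E).
Proof. ring. Qed.
Lemma negneg (E : C) : - - E = E.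
Proof. ring. Qed.

Definition QQg (a b : C) (F : C -> C) (Qp Qm : C -> C) : Prop :=
  forall E : C, a * Qp (Ci * E) * Qm (- (Ci * E)) - b * Qp (- (Ci * E)) * Qm (Ci * E) = F E.

Definition KF (a b : C) (F : C -> C) (E : C) : Prop := a * F E + b * F (- E) = 0.

Lemma QQg_neg a b F Qp Qm (H : QQg a b F Qp Qm) (E : C) :
  a * Qp (- (Ci * E)) * Qm (Ci * E) - b * Qp (Ci * E) * Qm (- (Ci * E)) = F (- E).
Proof. rewrite <- (H (- E)). rewrite negi, negneg. reflexivity. Qed.

Lemma Kz a b F Qp Qm (H : QQg a b F Qp Qm) (E : C) :
  Qm (- (Ci * E)) = 0 -> KF a b F E.
Proof.
  intro Hz. unfold KF. rewrite <- (H E), <- (QQg_neg _ _ _ _ _ H E), Hz. ring.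
Qed.

Lemma cont_lemma (D : C -> C) (w : C) :
  @continuous (AbsRing_UniformSpace C_AbsRing) C_NormedModule D w -> (forall t : R, (0 < t)%R -> D (w + Ci * RtoC t) = 0) -> D w = 0.
Proof.
  intros Hc Ht.
  assert (Hb : forall eps : posreal, @ball C_UniformSpace (D w) eps (RtoC 0)).
  { intro eps. pose proof (proj1 (filterlim_locally D (D w)) Hc eps) as L.
    destruct L as [delta Hd].
    rewrite <- (Ht (delta / 2)%R).
    - destruct delta as [d Hd0]; simpl in *. apply Hd.
      unfold ball; simpl; unfold AbsRing_ball, abs, minus, plus, opp; simpl.
      replace (w + Ci * RtoC (d / 2) + - w) with (Ci * RtoC (d / 2)) by ring.
      rewrite Cmod_mult, Cmod_Ci, Cmod_R, Rabs_pos_eq; lra.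
    - destruct delta as [d Hd0]; simpl; lra. }
  destruct (D w) as [u v] eqn:Ed.
  assert (Hu : forall eps : posreal, (Rabs (0 - u) < eps)%R /\ (Rabs (0 - v) < eps)%R).
  { intro eps. specialize (Hb eps). destruct Hb as [B1 B2].
    unfold ball in B1, B2; simpl in B1, B2; unfold AbsRing_ball, abs, minus, plus, opp in B1, B2; simpl in B1, B2.
    split; auto. }
  assert (u = 0%R).
  { destruct (Req_dec u 0) as [|Hne]; auto.
    assert (Hp : (0 < Rabs u)%R) by (apply Rabs_pos_lt; auto).
    destruct (Hu (mkposreal _ Hp)) as [H1 _]. simpl in H1.
    rewrite Rminus_0_l, Rabs_Ropp in H1. lra. }
  assert (v = 0%R).
  { destruct (Req_dec v 0) as [|Hne]; auto.
    assert (Hp : (0 < Rabs v)%R) by (apply Rabs_pos_lt; auto).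
    destruct (Hu (mkposreal _ Hp)) as [_ H1]. simpl in H1.
    rewrite Rminus_0_l, Rabs_Ropp in H1. lra. }
  subst. reflexivity.
Qed.

Lemma core (a b : C) (F : C -> C) (Qp Qpt Qm : C -> C) :
  a * a <> b * b ->
  (forall (E : C) (t : R), t <> 0%R -> KF a b F E -> KF a b F (E + RtoC t) -> False) ->
  (forall z, @continuous (AbsRing_UniformSpace C_AbsRing) C_NormedModule Qp z) -> (forall z, @continuous (AbsRing_UniformSpace C_AbsRing) C_NormedModule Qpt z) ->
  QQg a b F Qp Qm -> QQg a b F Qpt Qm -> Qp = Qpt.
Proof.
  intros Hab HK Cp Cpt H1 H2.
  assert (h0 : forall E, (Qp (Ci * E) - Qpt (Ci * E)) * Qm (- (Ci * E)) = 0).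
  { intro E. apply (Cmult_int (a * a - b * b)).
    { intro Hc. apply Hab. replace (a*a) with ((a*a - b*b) + b*b) by ring. rewrite Hc. ring. }
    pose proof (H1 E) as e1. pose proof (H2 E) as e2.
    pose proof (QQg_neg _ _ _ _ _ H1 E) as e3. pose proof (QQg_neg _ _ _ _ _ H2 E) as e4.
    transitivity (a * ((a * Qp (Ci * E) * Qm (- (Ci * E)) - b * Qp (- (Ci * E)) * Qm (Ci * E))
                      - (a * Qpt (Ci * E) * Qm (- (Ci * E)) - b * Qpt (- (Ci * E)) * Qm (Ci * E)))
                 + b * ((a * Qp (- (Ci * E)) * Qm (Ci * E) - b * Qp (Ci * E) * Qm (- (Ci * E)))
                      - (a * Qpt (- (Ci * E)) * Qm (Ci * E) - b * Qpt (Ci * E) * Qm (- (Ci * E))))).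
    { ring. }
    rewrite e1, e2, e3, e4. ring. }
  apply functional_extensionality. intro w.
  assert (Hw : Ci * (- (Ci * w)) = w).
  { destruct w; apply injective_projections; simpl; ring. }
  set (D := fun z => Qp z - Qpt z).
  assert (HK0 : forall E, D (Ci * E) <> 0 -> KF a b F E).
  { intros E HE. apply (Kz _ _ _ Qp Qm H1). apply (Cmult_int (D (Ci * E))); [exact HE | exact (h0 E)]. }
  assert (HD : D w = 0).
  { destruct (classic (D w = 0)) as [Hz|Hnz]; auto.
    apply cont_lemma.
    - apply (@continuous_minus (AbsRing_UniformSpace C_AbsRing) C_AbsRing C_NormedModule Qp Qpt w (Cp w) (Cpt w)).
    - intros t Ht. apply NNPP. intro Hne. exfalso.
      set (E := - (Ci * w)).
      apply (HK E t); [lra| |].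
      + apply HK0. unfold E; rewrite Hw; exact Hnz.
      + apply HK0. replace (Ci * (E + RtoC t)) with (w + Ci * RtoC t); auto.
        unfold E. rewrite Cmult_plus_distr_l, Hw. reflexivity. }
  unfold D in HD. replace (Qpt w) with (Qp w - (Qp w - Qpt w)) by ring. rewrite HD. ring.
Qed.

Lemma QQg_swap a b F Qp Qm : QQg a b F Qp Qm ->
  QQg b a (fun E => - F E) Qm Qp.
Proof. unfold QQg. intros H E. rewrite <- (H E). ring. Qed.

Lemma KF_swap a b F E : KF b a (fun E => - F E) E -> KF a b F (- E).
Proof. unfold KF. rewrite negneg. intro H.
  replace (a * F (- E) + b * F E) with (- (b * - F E + a * - F (- E))) by ring.
  rewrite H. ring. Qed.

Lemma RtoC_opp t : RtoC (- t) = - RtoC t.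
Proof. apply injective_projections; simpl; ring. Qed.

Lemma Ci_nz : Ci <> 0.
Proof. intro H. apply (f_equal snd) in H. simpl in H. lra. Qed.

Lemma Cexp_nz u : Cexp u <> 0.
Proof. intro H. assert (H1 : Cexp u * Cexp (- u) = 1).
  { rewrite <- Cexp_add. replace (u + - u) with (RtoC 0) by ring. apply Cexp_0. }
  rewrite H in H1. apply C1_nz. rewrite <- H1. ring. Qed.

Section S.
Variable x : C.
Let a := Cexp x.
Let b := Cexp (- x).
Let F := fun E => Ci * Cexp (E * RtoC PI / 4).

Lemma ab1 : a * b = 1.
Proof. unfold a, b. rewrite <- Cexp_add. replace (x + - x) with (RtoC 0) by ring. apply Cexp_0. Qed.

Lemma KF_val E : KF a b F E -> a * a * Cexp (E * RtoC PI / 2) = -1.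
Proof.
  unfold KF, F. intro H.
  assert (Hc : Cexp (E * RtoC PI / 4) * Cexp (- E * RtoC PI / 4) = 1).
  { rewrite <- Cexp_add. replace (E * RtoC PI / 4 + - E * RtoC PI / 4) with (RtoC 0) by field. apply Cexp_0. }
  assert (Hc2 : Cexp (E * RtoC PI / 2) = Cexp (E * RtoC PI / 4) * Cexp (E * RtoC PI / 4)).
  { rewrite <- Cexp_add. f_equal. field. }
  rewrite Hc2.
  set (c := Cexp (E * RtoC PI / 4)). set (d := Cexp (- E * RtoC PI / 4)). fold c d in H, Hc.
  assert (Hz : Ci * (a * a * (c * c) + 1) = 0).
  { transitivity (a * c * (a * (Ci * c) + b * (Ci * d)) - Ci * (a * b) * (c * d) + Ci).
    { ring. }
    rewrite H, ab1, Hc. ring. }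
  apply Cmult_int in Hz; [|exact Ci_nz].
  replace (a * a * (c * c)) with ((a * a * (c * c) + 1) - 1) by ring. rewrite Hz. ring.
Qed.

Lemma KF_nondeg E t : t <> 0%R -> KF a b F E -> KF a b F (E + RtoC t) -> False.
Proof.
  intros Ht K1 K2. apply KF_val in K1. apply KF_val in K2.
  assert (Hs : Cexp ((E + RtoC t) * RtoC PI / 2) = Cexp (E * RtoC PI / 2) * Cexp (RtoC (t * PI / 2))).
  { rewrite <- Cexp_add. f_equal. apply injective_projections; simpl; field. }
  rewrite Hs, Cexp_RtoC in K2.
  set (X := a * a * Cexp (E * RtoC PI / 2)). fold X in K1.
  assert (He0 : X * (RtoC (exp (t * PI / 2)) - 1) = 0).
  { transitivity (a * a * (Cexp (E * RtoC PI / 2) * RtoC (exp (t * PI / 2))) - X).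
    { unfold X; ring. }
    rewrite K2, K1. ring. }
  apply Cmult_int in He0.
  2:{ rewrite K1. intro Hm. apply (f_equal fst) in Hm. simpl in Hm. lra. }
  assert (He : RtoC (exp (t * PI / 2)) = 1).
  { replace (RtoC (exp (t * PI / 2))) with ((RtoC (exp (t * PI / 2)) - 1) + 1) by ring. rewrite He0. ring. }
  apply (f_equal fst) in He. simpl in He.
  apply (f_equal ln) in He. rewrite ln_exp, ln_1 in He.
  pose proof PI_RGT_0. apply Ht.
  apply (Rmult_eq_reg_r (PI / 2)); [|lra]. lra.
Qed.
End S.

Lemma ab_ne (beta : C) : (forall n : Z, beta <> RtoC (IZR n)) ->
  let x := Ci * beta * RtoC PI / 2 in Cexp x * Cexp x <> Cexp (- x) * Cexp (- x).
Proof.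
  intros Hb x Heq.
  assert (H4 : Cexp ((x + x) + (x + x)) = 1).
  { rewrite !Cexp_add. rewrite Heq at 2.
    transitivity ((Cexp x * Cexp (- x)) * (Cexp x * Cexp (- x))). { ring. }
    rewrite <- Cexp_add. replace (x + - x) with (RtoC 0) by ring. rewrite Cexp_0. ring. }
  destruct beta as [br bi].
  replace ((x + x) + (x + x)) with ((- (2 * PI * bi))%R, (2 * PI * br)%R) in H4.
  2:{ unfold x. apply injective_projections; simpl; field. }
  unfold Cexp in H4. simpl in H4.
  pose proof (f_equal fst H4) as H1. pose proof (f_equal snd H4) as H2. simpl in H1, H2.
  set (r := (- (2 * PI * bi))%R) in *. set (s := (2 * PI * br)%R) in *.
  pose proof (exp_pos r) as Hp.
  assert (Hs : sin s = 0%R).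
  { apply (Rmult_eq_reg_l (exp r)); lra. }
  assert (Hc : cos s = 1%R).
  { pose proof (sin2_cos2 s) as Hsc. rewrite Hs in Hsc. unfold Rsqr in Hsc.
    assert (cos s * cos s = 1)%R by lra.
    assert (0 < cos s)%R.
    { destruct (Rlt_or_le 0 (cos s)); auto. nra. }
    nra. }
  assert (Hr : exp r = 1%R) by (rewrite Hc in H1; lra).
  apply (f_equal ln) in Hr. rewrite ln_exp, ln_1 in Hr.
  assert (Hsin : sin (PI * br) = 0%R).
  { pose proof (cos_2a_sin (PI * br)) as Hc2.
    replace (2 * (PI * br))%R with s in Hc2 by (unfold s; ring).
    rewrite Hc in Hc2. nra. }
  destruct (sin_eq_0_0 _ Hsin) as [k Hk].
  apply (Hb k).
  pose proof PI_RGT_0.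
  assert (br = IZR k).
  { apply (Rmult_eq_reg_l PI); [|lra]. rewrite Hk. ring. }
  assert (bi = 0%R).
  { unfold r in Hr. nra. }
  subst. apply injective_projections; simpl; reflexivity.
Qed.

Theorem lemma6p2 (beta : C) (Qp Qpt Qm Qmt : C -> C) :
  (forall n : Z, beta <> RtoC (IZR n)) ->
  entire Qp -> entire Qpt -> entire Qm -> entire Qmt ->
  QQ_system beta Qp Qm ->
  QQ_system beta Qpt Qm ->
  QQ_system beta Qp Qmt ->
  Qp = Qpt /\ Qm = Qmt.
Proof.
  intros Hb Ep Ept Em Emt H1 H2 H3.
  pose proof (ab_ne beta Hb) as Hne. simpl in Hne.
  set (x := Ci * beta * RtoC PI / 2) in *.
  assert (Cont : forall f, entire f -> forall z, @continuous (AbsRing_UniformSpace C_AbsRing) C_NormedModule f z).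
  { intros f Ef z. exact (@ex_derive_continuous C_AbsRing C_NormedModule f z (Ef z)). }
  split.
  - apply (core (Cexp x) (Cexp (- x)) (fun E => Ci * Cexp (E * RtoC PI / 4)) Qp Qpt Qm).
    + exact Hne.
    + apply KF_nondeg.
    + apply Cont; auto.
    + apply Cont; auto.
    + exact H1.
    + exact H2.
  - apply (core (Cexp (- x)) (Cexp x) (fun E => - (Ci * Cexp (E * RtoC PI / 4))) Qm Qmt Qp).
    + intro H; apply Hne; symmetry; exact H.
    + intros E t Ht K1 K2.
      apply KF_swap in K1. apply KF_swap in K2.
      apply (KF_nondeg x (- E) (- t)); [lra| exact K1 |].
      replace (- E + RtoC (- t)) with (- (E + RtoC t)); [exact K2|].
      rewrite RtoC_opp. ring.
    + apply Cont; auto.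
    + apply Cont; auto.
    + apply (QQg_swap _ _ _ _ _ H1).
    + apply (QQg_swap _ _ _ _ _ H3).
Qed.
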